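(* Every componentwise polymatroidal monomial ideal $I\subset K[x_1,\ldots,x_n]$ satisfies the non-pure dual exchange property.
   Context: For a monomial $u$, $\deg_{x_i}(u)$ is the exponent of $x_i$ in $u$; $G(I)$ is the minimal monomial generating set. A monomial ideal generated in a single degree is polymatroidal if for all $u,v\in G(I)$ and all $i$ with $\deg_{x_i}(u)>\deg_{x_i}(v)$ there exists $j$ with $\deg_{x_j}(u)<\deg_{x_j}(v)$ and $x_j(u/x_i)\in I$. $I_{\langle j\rangle}$ denotes the ideal generated by all monomials of degree $j$ in $I$; $I$ is componentwise polymatroidal if every nonzero $I_{\langle j\rangle}$ is polymatroidal. A monomial ideal $I$ satisfies the non-pure dual exchange property if for all $u,v \in G(I)$ with $\deg(u) \leq \deg(v)$ and all $i$ with $\deg_{x_i}(v) < \deg_{x_i}(u)$, there exists $j$ with $\deg_{x_j}(v) > \deg_{x_j}(u)$ and $x_i(v/x_j) \in I$. *)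

(* Defs.v *)
From mathcomp Require Import all_boot.
Set Implicit Arguments. Unset Strict Implicit. Unset Printing Implicit Defensive.

(* A monomial x_1^{a_1} ... x_n^{a_n} of K[x_1,...,x_n] is represented by its
   exponent vector; variables are indexed by 'I_n. *)
Definition monom (n : nat) := {ffun 'I_n -> nat}.

Definition mdeg n (u : monom n) : nat := \sum_(i < n) u i.

Definition mdivides n (u w : monom n) : Prop := forall i, u i <= w i.

(* x_j * (u / x_i)  (only used when deg_{x_i} u > 0) *)
Definition mexch n (u : monom n) (i j : 'I_n) : monom n :=
  [ffun k => u k - (k == i) + (k == j)].

(* A monomial ideal is identified with the set of monomials it contains;
   this set is exactly a set closed under multiplication by monomials. *)
Definition is_monomial_ideal n (I : monom n -> Prop) : Prop :=
  forall u w, I u -> mdivides u w -> I w.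

(* G(I): the minimal monomial generating set = minimal monomials of I. *)
Definition mingens n (I : monom n -> Prop) (u : monom n) : Prop :=
  I u /\ forall v, I v -> mdivides v u -> v = u.

Definition deg_component n (I : monom n -> Prop) (j : nat) (w : monom n) : Prop :=
  exists2 u, I u /\ mdeg u = j & mdivides u w.

Definition nonzero_ideal n (I : monom n -> Prop) : Prop := exists u, I u.

Definition single_degree n (I : monom n -> Prop) : Prop :=
  exists d, forall u, mingens I u -> mdeg u = d.

Definition polymatroidal n (I : monom n -> Prop) : Prop :=
  single_degree I /\
  forall u v, mingens I u -> mingens I v ->
  forall i : 'I_n, v i < u i ->
  exists j : 'I_n, u j < v j /\ I (mexch u i j).

Definition componentwise_polymatroidal n (I : monom n -> Prop) : Prop :=
  forall j, nonzero_ideal (deg_component I j) -> polymatroidal (deg_component I j).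

Definition nonpure_dual_exchange n (I : monom n -> Prop) : Prop :=
  forall u v, mingens I u -> mingens I v -> mdeg u <= mdeg v ->
  forall i : 'I_n, v i < u i ->
  exists j : 'I_n, u j < v j /\ I (mexch v j i).

(* Main.v *)
Require Import Defs.
From mathcomp Require Import all_boot.
From mathcomp Require Import zify.
Set Implicit Arguments. Unset Strict Implicit.

Lemma mexchE n (u : monom n) i j k : mexch u i j k = u k - (k == i) + (k == j).
Proof. by rewrite ffunE. Qed.

Lemma sum_ind n (k : 'I_n) : \sum_(l < n) (l == k : nat) = 1.
Proof. by rewrite (bigD1 k) //= eqxx big1 // => l /negbTE ->. Qed.

Lemma sum_strict n (f g : 'I_n -> nat) k0 :
  (forall k, f k <= g k) -> f k0 < g k0 -> \sum_(k < n) f k < \sum_(k < n) g k.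
Proof.
move=> H H0; rewrite (bigD1 k0) //= [X in _ < X](bigD1 k0) //=.
rewrite -addSn leq_add //; exact: leq_sum.
Qed.

Lemma mdeg_le n (x y : monom n) : mdivides x y -> mdeg x <= mdeg y.
Proof. by move=> H; apply: leq_sum => k _; apply: H. Qed.

Lemma mdiv_eq n (x y : monom n) : mdivides x y -> mdeg y <= mdeg x -> x = y.
Proof.
move=> H Hd; apply/ffunP => k; apply/eqP; rewrite eqn_leq H /=.
rewrite leqNgt; apply/negP => Hk.
have := @sum_strict _ x y k H Hk; rewrite /mdeg in Hd; lia.
Qed.

Lemma mdeg_mexch n (a : monom n) k j : 0 < a k -> mdeg (mexch a k j) = mdeg a.
Proof.
move=> Hk.
have E : forall l, mexch a k j l + (l == k) = a l + (l == j).
  move=> l; rewrite mexchE; have [->|?] := eqVneq l k; lia.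
have : \sum_(l < n) (mexch a k j l + (l == k)) = \sum_(l < n) (a l + (l == j)).
  by apply: eq_bigr => l _; apply: E.
rewrite !big_split /= !sum_ind /mdeg; move/eqP; rewrite eqn_add2r => /eqP ->; reflexivity.
Qed.

Section Dual.
Variables (n : nat) (I : monom n -> Prop) (e : nat).
Let J := deg_component I e.

Lemma J_ge x : J x -> e <= mdeg x.
Proof. by case=> y [_ <-]; apply: mdeg_le. Qed.

Lemma mg_J x : mingens J x -> mdeg x = e.
Proof.
case=> Jx Hmin; case: (Jx) => y [Iy Hy] Hyx.
have Jy : J y by exists y => //.
by rewrite -(Hmin y Jy Hyx).
Qed.

Lemma J_mg x : J x -> mdeg x = e -> mingens J x.
Proof.
move=> Jx Hd; split=> // v Jv Hv; apply: mdiv_eq => //.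
by rewrite Hd; apply: J_ge.
Qed.

Hypothesis EP : forall u v, mingens J u -> mingens J v ->
  forall i : 'I_n, v i < u i ->
  exists j : 'I_n, u j < v j /\ J (mexch u i j).

Lemma dual_ex d : forall (a b : monom n) (i : 'I_n),
  \sum_(l < n) (a l - b l) <= d -> mingens J a -> mingens J b -> b i < a i ->
  exists j : 'I_n, a j < b j /\ J (mexch b j i).
Proof.
elim: d => [|d IH] a b i Hs Ma Mb Hi.
  have : a i - b i <= \sum_(l < n) (a l - b l).
    by rewrite (bigD1 i) //= leq_addr.
  lia.
case: (boolP [exists k, (b k < a k) && ((k != i) || ((b i).+1 < a i))]).
  move/existsP => [k /andP [Hk Hor]].
  have [j [Hj Ja']] := @EP _ _ Ma Mb _ Hk.
  have Hjk : j != k by apply/eqP => E; subst j; lia.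
  have Hkj : k != j by rewrite eq_sym.
  set a' := mexch a k j in Ja'.
  have Ma' : mingens J a'.
    apply: J_mg => //; rewrite mdeg_mexch; [exact: mg_J | lia].
  have Hs' : \sum_(l < n) (a' l - b l) <= d.
    have : \sum_(l < n) (a' l - b l) < \sum_(l < n) (a l - b l).
      apply: (@sum_strict _ _ _ k).
        move=> l; rewrite /a' mexchE.
        have [->|?] := eqVneq l k; first by rewrite ?(negbTE Hjk) ?(negbTE Hkj) /=; lia.
        have [->|?] := eqVneq l j; lia.
      by rewrite /a' mexchE eqxx ?(negbTE Hjk) ?(negbTE Hkj) /=; lia.
    lia.
  have Hi' : b i < a' i.
    rewrite /a' mexchE.
    have [E|Ne] := eqVneq i k.
      subst k; move: Hor; rewrite eqxx /= => Hor.
      rewrite ?eqxx (negbTE Hkj) /=; lia.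
    have [E'|Nij] := eqVneq i j; [subst j; rewrite ?eqxx ?(negbTE Ne) /=; lia | rewrite ?(negbTE Ne) ?(negbTE Nij) /=; lia].
  have [j' [Hj' Jb]] := IH a' b i Hs' Ma' Mb Hi'.
  exists j'; split => //.
  move: Hj'; rewrite /a' mexchE.
  have [E|?] := eqVneq j' k.
    subst j'; rewrite ?(negbTE Hjk) ?(negbTE Hkj) /=; lia.
  have [->|?] := eqVneq j' j; lia.
rewrite negb_exists => /forallP Hno.
have [j [Hj Ja']] := @EP _ _ Ma Mb _ Hi.
have Hji : j != i by apply/eqP => E; subst j; lia.
have Hij : i != j by rewrite eq_sym.
have Hdiv : mdivides (mexch a i j) b.
  move=> k; rewrite mexchE.
  have := Hno k; rewrite negb_and negb_or negbK -leqNgt -leqNgt => Hk.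
  have [E|Nki] := eqVneq k i.
    subst k; rewrite ?eqxx ?(negbTE Hij) /= in Hk *; case/orP: Hk => Hk; lia.
  rewrite (negbTE Nki) orbF in Hk.
  have [->|?] := eqVneq k j; lia.
have Eb : mexch a i j = b.
  apply: mdiv_eq => //; rewrite (mg_J Mb); exact: J_ge.
exists j; split => //.
have -> : mexch b j i = a.
  apply/ffunP => k; rewrite -Eb !mexchE.
  have [->|?] := eqVneq k i; first by rewrite ?(negbTE Hji) ?(negbTE Hij) ?eqxx /=; lia.
  have [->|?] := eqVneq k j; rewrite ?(negbTE Hji) ?eqxx /=; lia.
by case: Ma.
Qed.

End Dual.

Theorem proposition1p5 (n : nat) (I : monom n -> Prop) :
  is_monomial_ideal I -> componentwise_polymatroidal I -> nonpure_dual_exchange I.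
Proof.
move=> Hid Hcp u v Mu Mv Hdeg i Hi.
set e := mdeg v.
set c := e - mdeg u.
pose w : monom n := [ffun k => u k + (k == i) * c].
have Huw : mdivides u w by move=> k; rewrite ffunE leq_addr.
have Hdw : mdeg w = e.
  rewrite /mdeg (eq_bigr (fun k => u k + (k == i) * c)); last by move=> k _; rewrite ffunE.
  rewrite big_split /= -big_distrl /= sum_ind -/(mdeg u) /c /e; lia.
have Jw : deg_component I e w.
  by exists w; [split => //; apply: Hid Huw; case: Mu | by []].
have Jv : deg_component I e v by exists v; [split => //; case: Mv | by []].
have [_ EP] := Hcp e (ex_intro _ v Jv).
have Mw := J_mg Jw Hdw.
have Mv' := J_mg Jv (erefl e).
have Hi' : v i < w i by rewrite ffunE eqxx; lia.
have [j [Hj Jx]] := dual_ex EP (leqnn _) Mw Mv' Hi'.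
exists j; split.
  by apply: leq_ltn_trans Hj; apply: Huw.
case: Jx => y [Iy _] Hy; exact: Hid Iy Hy.
Qed.
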